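(* Let $L$ be a finite nonassociative C-loop of order $n$ whose nucleus $N$ has order $m$. Then (i) $n/m\equiv 2 \pmod 6$ or $n/m\equiv 4\pmod 6$; (ii) $n$ is even; (iii) if $n=p^k$ for a prime $p$ and positive integer $k$, then $p=2$ and $k>3$. Moreover, for every integer $k>3$ there exists a nonassociative C-loop of order $2^k$ that is not a Steiner loop.
   Context: A C-loop is a loop satisfying $x(y(yz))=((xy)y)z$ for all $x,y,z$. The nucleus of a loop is the set of elements $a$ with $a(yz)=(ay)z$, $y(az)=(ya)z$, $y(za)=(yz)a$ for all $y,z$. A Steiner loop is a loop with neutral element $e$ satisfying $xx=e$, $(yx)x=y$, $xy=yx$ for all $x,y$. *)

(* Defs.v *)
From mathcomp Require Import all_boot.
Set Implicit Arguments. Unset Strict Implicit. Unset Printing Implicit Defensive.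

Section Loops.
Variable T : finType.
Variable mul : T -> T -> T.
Variable e : T.

Definition is_loop : Prop :=
  (forall a, bijective (mul a)) /\ (forall a, bijective (fun x => mul x a)) /\
  (forall x, mul e x = x /\ mul x e = x).

Definition is_C_loop : Prop :=
  is_loop /\ forall x y z, mul x (mul y (mul y z)) = mul (mul (mul x y) y) z.

Definition associative_op : Prop :=
  forall x y z, mul x (mul y z) = mul (mul x y) z.

Definition nucleus : {set T} :=
  [set a | [forall y, forall z,
     [&& mul a (mul y z) == mul (mul a y) z,
         mul y (mul a z) == mul (mul y a) z &
         mul y (mul z a) == mul (mul y z) a]]].

Definition is_Steiner_loop : Prop :=
  is_loop /\ forall x y, mul x x = e /\ mul (mul y x) x = y /\ mul x y = mul y x.
End Loops.

(* Main.v *)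
Require Import Defs.
From mathcomp Require Import all_boot zify.
Set Implicit Arguments. Unset Strict Implicit. Unset Printing Implicit Defensive.
Lemma invol_even (U : finType) (f : U -> U) (n : nat) (A : {set U}) :
  #|A| = n ->
  {in A, forall x, f x \in A} -> {in A, forall x, f (f x) = x} ->
  {in A, forall x, f x != x} -> ~~ odd #|A|.
Proof.
elim: n {-2}n (leqnn n) A => [|N IH] n Hn A HA Hc Hi Hf.
  by move: Hn; rewrite leqn0 => /eqP Hn; rewrite HA Hn.
case: (set_0Vmem A) => [->|[x xA]]; first by rewrite cards0.
set B := [set x; f x].
have BA : B \subset A by apply/subsetP => y; rewrite !inE => /orP[] /eqP ->; rewrite ?Hc.
have cB : #|B| = 2 by rewrite cards2 eq_sym (Hf x xA).
have cA : #|A :\: B| = #|A| - 2 by rewrite cardsD (setIidPr BA) cB.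
have : ~~ odd #|A :\: B|.
  apply: (IH (#|A| - 2)); [lia| done | | |].
  - move=> y; rewrite !inE => /andP[/norP[yx yfx] yA]; rewrite Hc // andbT.
    apply/norP; split; apply/negP => /eqP H.
      by move/eqP: yfx; apply; rewrite -H Hi.
    by move/eqP: yx; apply; rewrite -(Hi y yA) H Hi.
  - by move=> y; rewrite inE => /andP[_ yA]; apply: Hi.
  - by move=> y; rewrite inE => /andP[_ yA]; apply: Hf.
have : 2 <= #|A| by rewrite -cB subset_leq_card.
rewrite cA; move: #|A| => a; clear; case: a => [//|[//|a]] _.
by rewrite !subSS subn0 /= negbK.
Qed.

Lemma cyc3_dvd (U : finType) (f : U -> U) (n : nat) (A : {set U}) :
  #|A| = n ->
  {in A, forall x, f x \in A} -> {in A, forall x, f (f (f x)) = x} ->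
  {in A, forall x, f x != x} -> 3 %| #|A|.
Proof.
elim: n {-2}n (leqnn n) A => [|N IH] n Hn A HA Hc Hi Hf.
  by move: Hn; rewrite leqn0 => /eqP Hn; rewrite HA Hn.
case: (set_0Vmem A) => [->|[x xA]]; first by rewrite cards0.
have fxA := Hc x xA; have ffxA := Hc _ fxA.
have finj : {in A &, injective f}.
  by move=> y z yA zA E; rewrite -(Hi y yA) -(Hi z zA) E.
have d1 : f x != x := Hf x xA.
have d2 : f (f x) != f x := Hf _ fxA.
have d3 : f (f x) != x.
  apply/negP => /eqP E; move/eqP: d1; apply.
  by rewrite -{2}(Hi x xA) E.
set B := [set x; f x; f (f x)].
have BA : B \subset A.
  by apply/subsetP => y; rewrite !inE => /orP[/orP[]|] /eqP ->.
have cB : #|B| = 3.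
  have -> : B = [set y in [:: x; f x; f (f x)]] by apply/setP => y; rewrite !inE orbA.
  rewrite cardsE; apply/card_uniqP => /=; rewrite !inE !negb_or.
  by rewrite eq_sym d1 eq_sym d3 eq_sym d2.
have cA : #|A :\: B| = #|A| - 3 by rewrite cardsD (setIidPr BA) cB.
have : 3 %| #|A :\: B|.
  apply: (IH (#|A| - 3)); [lia| done | | |].
  - move=> y; rewrite !inE => /andP[H yA]; rewrite Hc // andbT.
    have fyA := Hc y yA.
    apply: contra H => /orP[/orP[]|] /eqP E.
    + by rewrite -(Hi y yA) E eqxx !orbT.
    + by rewrite (finj y x yA xA E) eqxx.
    + by rewrite (finj y (f x) yA fxA E) eqxx !orbT.
  - by move=> y; rewrite inE => /andP[_ yA]; apply: Hi.
  - by move=> y; rewrite inE => /andP[_ yA]; apply: Hf.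
have : 3 <= #|A| by rewrite -cB subset_leq_card.
rewrite cA; move: #|A| => a; clear => Ha H; lia.
Qed.

Section SteinerCount.
Variables (U : finType) (P : {set U}) (op : U -> U -> U) (one : U).
Hypothesis one_in : one \in P.
Hypothesis op_in : {in P &, forall X Y, op X Y \in P}.
Hypothesis opXX : {in P, forall X, op X X = one}.
Hypothesis op1X : {in P, forall X, op one X = X}.
Hypothesis opR : {in P &, forall X Y, op (op Y X) X = Y}.
Hypothesis opL : {in P &, forall X Y, op X (op X Y) = Y}.

Lemma opC : {in P &, forall X Y, op X Y = op Y X}.
Proof.
move=> X Y XP YP.
have WP := op_in XP YP.
have H1 : op (op X Y) Y = X by rewrite opR.
have H2 : op (op X Y) X = Y by rewrite -{2}H1 opL.
by rewrite -{2}H2 opR.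
Qed.

Lemma opX1 : {in P, forall X, op X one = X}.
Proof. by move=> X XP; rewrite opC // op1X. Qed.

Lemma steiner_even : 1 < #|P| -> ~~ odd #|P|.
Proof.
move=> H.
have [a] : exists a, a \in P :\ one.
  by apply/card_gt0P; have := cardsD1 one P; rewrite one_in => E; lia.
rewrite !inE => /andP[aone aP].
apply: (@invol_even _ (fun X => op X a) #|P|) => // X XP.
- exact: op_in.
- exact: opR.
- apply/negP => /eqP E; move/eqP: aone; apply.
  by rewrite -(opL XP aP) E opXX.
Qed.

Lemma steiner_mod6 : 1 < #|P| -> #|P| %% 6 = 2 \/ #|P| %% 6 = 4.
Proof.
move=> H.
have Hev := steiner_even H.
set D := [set p : U * U | [&& p.1 \in P :\ one & p.2 \in (P :\ one) :\ p.1]].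
have cD : #|D| = (#|P| - 1) * (#|P| - 1 - 1).
  rewrite -sum1_card.
  rewrite (eq_bigl (fun p : U * U => (p.1 \in P :\ one) && (p.2 \in (P :\ one) :\ p.1)));
    last by move=> p; rewrite inE.
  rewrite -(pair_big_dep (fun i => i \in P :\ one) (fun i j => j \in (P :\ one) :\ i) (fun _ _ => 1)) /=.
  rewrite (eq_bigr (fun _ => #|P| - 1 - 1)); last first.
    move=> i iP; rewrite sum1_card; have := cardsD1 i (P :\ one); have := cardsD1 one P.
    rewrite iP one_in; lia.
  rewrite sum_nat_const; have := cardsD1 one P; rewrite one_in mulnC; lia.
have : 3 %| #|D|.
  apply: (@cyc3_dvd _ (fun p => (p.2, op p.1 p.2)) #|D|) => //.
  - case=> X Y; rewrite !inE /= => /and4P[/andP[X1 XP] YX Y1 YP].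
    have WP := op_in XP YP.
    rewrite Y1 YP WP /= andbT.
    apply/andP; split; apply/negP => /eqP E.
      by move: (opR YP XP); rewrite E opXX // => E'; rewrite E' eqxx in X1.
    by move: (opL XP YP); rewrite E opX1 // => E'; rewrite E' eqxx in YX.
  - case=> X Y; rewrite !inE /= => /and4P[/andP[X1 XP] YX Y1 YP].
    have WP := op_in XP YP.
    have E1 : op Y (op X Y) = X by rewrite (opC XP YP) opL.
    by rewrite E1 (opC XP YP) opR.
  - case=> X Y; rewrite !inE /= => /and4P[/andP[X1 XP] YX Y1 YP].
    by apply/negP => /eqP [E _]; rewrite E eqxx in YX.
rewrite cD => H3.
have : (3 %| #|P| - 1) || (3 %| #|P| - 1 - 1) by rewrite -Euclid_dvdM.
move: Hev; rewrite -dvdn2 => Hev.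
case/orP => H4; lia.
Qed.
End SteinerCount.

Section CLoop.
Variables (T : finType) (mul : T -> T -> T) (e : T).
Hypothesis HC : is_C_loop mul e.
Local Notation "x ** y" := (mul x y) (at level 40, left associativity).

Lemma Hloop : is_loop mul e. Proof. by case: HC. Qed.
Lemma mul1l x : e ** x = x. Proof. by case: Hloop => _ [_ /(_ x) []]. Qed.
Lemma mul1r x : x ** e = x. Proof. by case: Hloop => _ [_ /(_ x) []]. Qed.
Lemma mulI a : injective (mul a).
Proof. by case: Hloop => /(_ a) /bij_inj. Qed.
Lemma mulIr a : injective (fun x => x ** a).
Proof. by case: Hloop => _ [/(_ a) /bij_inj]. Qed.
Lemma ldiv_ex a w : exists x, a ** x = w.
Proof. case: Hloop => /(_ a) [g _ gK] _; by exists (g w); rewrite gK. Qed.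
Lemma rdiv_ex a w : exists x, x ** a = w.
Proof. case: Hloop => _ [/(_ a) [g _ gK] _]; by exists (g w); rewrite gK. Qed.
Lemma Cid x y z : x ** (y ** (y ** z)) = ((x ** y) ** y) ** z.
Proof. by case: HC. Qed.
Lemma LAP y z : y ** (y ** z) = (y ** y) ** z.
Proof. by have := Cid e y z; rewrite !mul1l. Qed.
Lemma RAP x y : (x ** y) ** y = x ** (y ** y).
Proof. by have := Cid x y e; rewrite !mul1r. Qed.

Definition inv x := odflt e [pick y | x ** y == e].
Lemma mulV x : x ** inv x = e.
Proof.
rewrite /inv; case: pickP => [y /eqP //|H]; exfalso.
by have [y Hy] := ldiv_ex x e; move: (H y); rewrite Hy eqxx.
Qed.
Lemma RIP w y : (w ** y) ** inv y = w.
Proof.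
have [x <-] := rdiv_ex y w.
by have := Cid x y (inv y); rewrite mulV mul1r.
Qed.
Lemma LIP y u : inv y ** (y ** u) = u.
Proof.
have [l Hl] := rdiv_ex y e.
have H : forall u, l ** (y ** u) = u.
  move=> u'; have [z <-] := ldiv_ex y u'.
  by rewrite Cid Hl mul1l.
have := RIP l y; rewrite Hl mul1l => ->; exact: H.
Qed.
Lemma mulVl x : inv x ** x = e.
Proof. by have := LIP x e; rewrite mul1r. Qed.
Lemma invK x : inv (inv x) = x.
Proof. by apply: (@mulI (inv x)); rewrite mulV mulVl. Qed.
Lemma LIP' y u : y ** (inv y ** u) = u.
Proof. by have := LIP (inv y) u; rewrite invK. Qed.
Lemma RIP' w y : (w ** inv y) ** y = w.
Proof. by have := RIP w (inv y); rewrite invK. Qed.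
Lemma invM x y : inv (x ** y) = inv y ** inv x.
Proof.
have H1 : inv (x ** y) ** x = inv y.
  by rewrite -{2}(RIP x y) LIP.
by rewrite -H1 RIP.
Qed.
Lemma inv_inj : injective inv.
Proof. exact: (can_inj invK). Qed.
Lemma inv1 : inv e = e.
Proof. by have := mulV e; rewrite mul1l. Qed.

Definition mn a := forall x z, x ** (a ** z) = (x ** a) ** z.
Lemma mn_sq y : mn (y ** y).
Proof. by move=> x z; rewrite -LAP -RAP Cid. Qed.
Lemma mn_inv a : mn a -> mn (inv a).
Proof.
move=> Ha u v.
have := Ha (inv v) (inv u).
move/(congr1 inv); rewrite !invM !invK => ->.
by [].
Qed.
Lemma mn_l a : mn a -> forall x y, a ** (x ** y) = (a ** x) ** y.
Proof.
move=> Ha x y.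
set u := a ** (x ** y).
have H1 : inv x ** (inv a ** u) = y by rewrite /u !LIP.
rewrite (mn_inv Ha) -invM in H1.
by rewrite -H1 LIP'.
Qed.
Lemma mn_r a : mn a -> forall x y, x ** (y ** a) = (x ** y) ** a.
Proof.
move=> Ha x y.
set u := (x ** y) ** a.
have H1 : (u ** inv a) ** inv y = x by rewrite /u !RIP.
rewrite -(mn_inv Ha) -invM in H1.
by rewrite -H1 RIP'.
Qed.
Lemma mnM a b : mn a -> mn b -> mn (a ** b).
Proof.
move=> Ha Hb x z.
by rewrite -(mn_l Ha) Ha Hb (mn_r Hb).
Qed.
Lemma mn_e : mn e.
Proof. by move=> x z; rewrite mul1l mul1r. Qed.

Lemma inv_sq x : inv x = x ** inv (x ** x).
Proof.
have H : inv x ** (x ** x) = x by rewrite LIP.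
by rewrite -{2}H RIP.
Qed.

Lemma mn_conj a x : mn a -> mn ((x ** a) ** inv x).
Proof.
move=> Ha.
have H1 : (x ** a) ** x = ((x ** a) ** (x ** a)) ** inv a.
  by rewrite (mn_r Ha) RIP.
rewrite inv_sq (mn_r (mn_inv (mn_sq x))) H1.
apply: mnM; last exact/mn_inv/mn_sq.
apply: mnM; [exact: mn_sq | exact: mn_inv].
Qed.

Lemma nucleusP a : reflect (mn a) (a \in nucleus mul).
Proof.
apply: (iffP idP).
  rewrite inE => /forallP H x z; have /forallP := H x => /(_ z).
  by case/and3P=> _ /eqP.
move=> Ha; rewrite inE; apply/forallP=> y; apply/forallP=> z.
by rewrite (mn_l Ha) Ha (mn_r Ha) !eqxx.
Qed.


Definition Rel x y := (y ** inv x) \in nucleus mul.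
Definition cos x := [set y in [set: T] | Rel x y].
Definition Pq := equivalence_partition Rel [set: T].
Definition rep (X : {set T}) := odflt e [pick y in X].
Lemma rep_in (X : {set T}) y : y \in X -> rep X \in X.
Proof. by move=> yX; rewrite /rep; case: pickP => [z //|/(_ y)]; rewrite yX. Qed.
Definition op X Y := cos (rep X ** rep Y).
Definition one := cos e.

Lemma RelP x y : reflect (exists2 a, mn a & y = a ** x) (Rel x y).
Proof.
apply: (iffP idP).
  by move/nucleusP => H; exists (y ** inv x) => //; rewrite RIP'.
by case=> a Ha ->; apply/nucleusP; rewrite RIP.
Qed.

Lemma Rel_refl x : Rel x x.
Proof. by apply/nucleusP; rewrite mulV; apply: mn_e. Qed.

Lemma Rel_sym x y : Rel x y -> Rel y x.
Proof.
move/nucleusP/mn_inv => H; apply/nucleusP.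
by move: H; rewrite invM invK.
Qed.

Lemma Rel_trans x y z : Rel x y -> Rel y z -> Rel x z.
Proof.
case/RelP=> a Ha ->; case/RelP=> b Hb ->; apply/RelP.
by exists (b ** a); [apply: mnM | rewrite (mn_l Hb)].
Qed.

Lemma Rel_equiv : {in [set: T] & &, equivalence_rel Rel}.
Proof.
move=> x y z _ _ _; split; first exact: Rel_refl.
move=> Hxy; apply/idP/idP => H.
  exact: Rel_trans (Rel_sym Hxy) H.
exact: Rel_trans Hxy H.
Qed.

Lemma in_cos x y : (y \in cos x) = Rel x y.
Proof. by rewrite !inE. Qed.

Lemma cos_eq x y : Rel x y -> cos x = cos y.
Proof.
move=> H; apply/setP => z; rewrite !in_cos; apply/idP/idP => H'.
  exact: Rel_trans (Rel_sym H) H'.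
exact: Rel_trans H H'.
Qed.

Lemma cos_in x : cos x \in Pq.
Proof. by apply: imset_f; rewrite inE. Qed.

Lemma PqP X : X \in Pq -> exists x, X = cos x.
Proof. by case/imsetP => x _ ->; exists x. Qed.

Lemma repr_cos x : Rel x (rep (cos x)).
Proof. by rewrite -in_cos; apply: (@rep_in _ x); rewrite in_cos Rel_refl. Qed.

Lemma conj_ex a x : mn a -> exists2 b, mn b & x ** a = b ** x.
Proof. by move=> Ha; exists ((x ** a) ** inv x); [apply: mn_conj | rewrite RIP']. Qed.

Lemma RelM u u' v v' : Rel u u' -> Rel v v' -> Rel (u ** v) (u' ** v').
Proof.
case/RelP=> a Ha ->; case/RelP=> b Hb ->; apply/RelP.
have [b' Hb' E] := conj_ex u Hb.
exists (a ** b'); first exact: mnM.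
by rewrite -(mn_l Ha) Hb E -(mn_l Hb') (mn_l Ha).
Qed.

Lemma op_cos x y : op (cos x) (cos y) = cos (x ** y).
Proof. by rewrite /op; apply/esym/cos_eq/RelM; apply: repr_cos. Qed.

Lemma Rel_right a y : mn a -> Rel y (y ** a).
Proof. by move=> Ha; have [b Hb ->] := conj_ex y Ha; apply/RelP; exists b. Qed.

Lemma Rel_left a y : mn a -> Rel y (a ** y).
Proof. by move=> Ha; apply/RelP; exists a. Qed.

Lemma op_in : {in Pq &, forall X Y, op X Y \in Pq}.
Proof. by move=> X Y _ _; apply: cos_in. Qed.
Lemma opXX : {in Pq, forall X, op X X = one}.
Proof.
move=> X /PqP[x ->]; rewrite op_cos /one; apply/esym/cos_eq.
by rewrite -(mul1r (x ** x)); apply/Rel_left/mn_sq.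
Qed.
Lemma op1X : {in Pq, forall X, op one X = X}.
Proof. by move=> X /PqP[x ->]; rewrite /one op_cos mul1l. Qed.
Lemma opR : {in Pq &, forall X Y, op (op Y X) X = Y}.
Proof.
move=> X Y /PqP[x ->] /PqP[y ->]; rewrite !op_cos RAP.
by apply/esym/cos_eq/Rel_right/mn_sq.
Qed.
Lemma opL : {in Pq &, forall X Y, op X (op X Y) = Y}.
Proof.
move=> X Y /PqP[x ->] /PqP[y ->]; rewrite !op_cos LAP.
by apply/esym/cos_eq/Rel_left/mn_sq.
Qed.
Lemma one_in : one \in Pq.
Proof. exact: cos_in. Qed.

Lemma card_cos x : #|cos x| = #|nucleus mul|.
Proof.
have -> : cos x = [set a ** x | a in nucleus mul].
  apply/setP => y; rewrite in_cos; apply/idP/imsetP.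
    by case/RelP=> a Ha ->; exists a => //; apply/nucleusP.
  by case=> a /nucleusP Ha ->; apply/RelP; exists a.
by rewrite card_imset //; apply: mulIr.
Qed.

Lemma cardT_Pq : #|T| = #|Pq| * #|nucleus mul|.
Proof.
rewrite -cardsT (card_partition (equivalence_partitionP Rel_equiv)).
rewrite -/Pq (eq_bigr (fun _ => #|nucleus mul|)) ?sum_nat_const //.
by move=> X /PqP[x ->]; apply: card_cos.
Qed.

Lemma nuc_gt0 : 0 < #|nucleus mul|.
Proof. by apply/card_gt0P; exists e; apply/nucleusP/mn_e. Qed.

Lemma Rel_e x : Rel e x = (x \in nucleus mul).
Proof. by rewrite /Rel inv1 mul1r. Qed.

Lemma Pq_gt1 : ~ associative_op mul -> 1 < #|Pq|.
Proof.
move=> NA; rewrite ltnNge; apply/negP => H1; apply: NA => x y z.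
have E : cos x = one.
  apply/eqP; move: H1; apply: contraLR => Hne.
  have : [set one; cos x] \subset Pq.
    by apply/subsetP => X; rewrite !inE => /orP[] /eqP ->; rewrite ?one_in ?cos_in.
  by move/subset_leq_card; rewrite cards2 eq_sym Hne -ltnNge.
have : x \in nucleus mul by rewrite -Rel_e -in_cos -/one -E in_cos Rel_refl.
by move/nucleusP => Hx; rewrite (mn_l Hx).
Qed.


Lemma opCq : {in Pq &, forall X Y, op X Y = op Y X}.
Proof. exact: (opC op_in opR opL). Qed.

Lemma Rel_comm u v : Rel (u ** v) (v ** u).
Proof. by rewrite -in_cos -op_cos -opCq ?cos_in // op_cos in_cos Rel_refl. Qed.

Lemma Pq_full (S : {set {set T}}) : S \subset Pq -> #|Pq| <= #|S| ->
  forall X, X \in Pq -> X \in S.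
Proof.
by move=> sub le X XP; have /eqP -> : S == Pq by rewrite eqEcard sub le.
Qed.

Lemma A1 x y z : Rel x y -> x ** (y ** z) = (x ** y) ** z.
Proof.
case/RelP=> a Ha ->.
have [b Hb E] := conj_ex x Ha.
rewrite -(mn_l Ha) Ha Ha E.
by rewrite -(mn_l Hb) -(mn_l Hb) -(mn_l Hb) LAP.
Qed.

Lemma A2 x y z : Rel y z -> x ** (y ** z) = (x ** y) ** z.
Proof.
case/RelP=> b Hb ->.
have [b' Hb' E] := conj_ex y Hb.
rewrite Hb E -(mn_l Hb') Hb'.
by rewrite Hb -(mn_r Hb) E Hb' RAP.
Qed.

Lemma notin_nuc_assoc x y z :
  ~ mn x -> ~ mn y -> ~ mn z -> x ** (y ** z) = (x ** y) ** z -> True.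
Proof. by []. Qed.

Lemma nuc_cases x y z :
  (mn x \/ mn y \/ mn z) -> x ** (y ** z) = (x ** y) ** z.
Proof.
case=> [Hx|[Hy|Hz]]; [exact: mn_l | exact: Hy | exact: mn_r].
Qed.

Lemma assoc_q2 : #|Pq| = 2 -> associative_op mul.
Proof.
move=> H2 x y z.
case Nx: (x \in nucleus mul); first by apply/nuc_cases; left; apply/nucleusP.
case Ny: (y \in nucleus mul); first by apply/nuc_cases; right; left; apply/nucleusP.
have Hne : cos x != one.
  by apply/negP=> /eqP E; move: Nx; rewrite -Rel_e -in_cos -/one -E in_cos Rel_refl.
have sub : [set one; cos x] \subset Pq.
  by apply/subsetP => X; rewrite !inE => /orP[] /eqP ->; rewrite ?one_in ?cos_in.
have := Pq_full sub; rewrite cards2 eq_sym Hne H2 => /(_ isT (cos y) (cos_in y)).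
rewrite !inE => /orP[] /eqP E.
  by move: Ny; rewrite -Rel_e -in_cos -/one -E in_cos Rel_refl.
by apply: A1; rewrite -in_cos -E in_cos Rel_refl.
Qed.

Lemma small_nuc : #|nucleus mul| <= 2 ->
  forall a, mn a -> a ** a = e /\ forall x, x ** a = a ** x.
Proof.
move=> H2 a Ha.
case: (eqVneq a e) => [->|ane]; first by split; [rewrite mul1l | move=> x; rewrite mul1l mul1r].
have sub : [set e; a] \subset nucleus mul.
  by apply/subsetP => X; rewrite in_set2 => /orP[] /eqP ->; apply/nucleusP => //; apply: mn_e.
have full : forall b, mn b -> b = e \/ b = a.
  move=> b /nucleusP Hb.
  have /eqP E : [set e; a] == nucleus mul.
    by rewrite eqEcard sub cards2 eq_sym ane.
  by move: Hb; rewrite -E !inE => /orP[] /eqP ->; [left|right].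
split.
  case: (full _ (mnM Ha Ha)) => // E.
  by move/eqP: ane; case; apply: (@mulI a); rewrite E mul1r.
move=> x; have [b Hb E] := conj_ex x Ha.
case: (full _ Hb) => Eb; last by rewrite E Eb.
by move/eqP: ane; case; apply: (@mulI x); rewrite E Eb mul1l mul1r.
Qed.

Section Small.
Hypothesis H2 : #|nucleus mul| <= 2.

Lemma cc a x : mn a -> x ** a = a ** x.
Proof. by move=> Ha; case: (small_nuc H2 Ha) => _ ->. Qed.
Lemma c2 a : mn a -> a ** a = e.
Proof. by move=> Ha; case: (small_nuc H2 Ha). Qed.
Lemma P1 a x y : mn a -> (a ** x) ** y = a ** (x ** y).
Proof. by move=> Ha; rewrite (mn_l Ha). Qed.
Lemma P2 a x y : mn a -> x ** (a ** y) = a ** (x ** y).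
Proof. by move=> Ha; rewrite Ha (cc _ Ha) (mn_l Ha). Qed.

Lemma comm_ex u v : exists2 c, mn c & v ** u = c ** (u ** v).
Proof. by case/RelP: (Rel_comm u v) => c Hc E; exists c. Qed.

Lemma flex u v : u ** (v ** u) = (u ** v) ** u.
Proof.
have [c Hc E] := comm_ex u v.
have Hs := mn_sq u.
have E' : u ** v = c ** (v ** u).
  by rewrite E (mn_l Hc) c2 ?mul1l.
have R1 : (u ** v) ** u = ((u ** v) ** inv u) ** (u ** u) by rewrite -(mn_r Hs) LIP.
have R2 : (u ** v) ** inv u = c ** v by rewrite E' (P1 _ _ Hc) RIP.
rewrite R1 R2 (P1 _ _ Hc) (cc _ Hs) E (P2 _ _ Hc) LAP.
by [].
Qed.

Lemma inv_c a : mn a -> inv a = a.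
Proof. by move=> Ha; apply: (@mulI a); rewrite mulV c2. Qed.

Lemma A4 u v : u ** (v ** (u ** v)) = (u ** v) ** (u ** v).
Proof.
have [c Hc E] := comm_ex u v.
have Hu := mn_sq u; have Hv := mn_sq v.
have E' : u ** v = c ** (v ** u).
  by rewrite E (mn_l Hc) c2 ?mul1l.
set z := u ** v.
have Hd : mn ((v ** v) ** ((u ** u) ** c)) by do 2 apply: mnM => //.
have Iz : inv z = ((v ** v) ** ((u ** u) ** c)) ** z.
  rewrite /z invM (inv_sq v) (inv_sq u) (inv_c Hu) (inv_c Hv).
  by rewrite (cc _ Hv) (P1 _ _ Hv) (cc _ Hu) (P2 _ _ Hu) E (mn_l Hu) (mn_l Hv).
have zz : z ** z = (v ** v) ** ((u ** u) ** c).
  have := mulV z; rewrite Iz (P2 _ _ Hd) => E2.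
  set D := (v ** v) ** ((u ** u) ** c) in Hd E2 *.
  have H : (D ** D) ** (z ** z) = z ** z by rewrite c2 ?mul1l.
  by rewrite -H (P1 _ _ Hd) E2 mul1r.
rewrite zz /z E' (P2 _ _ Hc) LAP (P2 _ _ Hc) Hv (cc _ Hv) (P1 _ _ Hv).
by rewrite -(P1 _ _ Hc) -(cc (v ** v) Hc) (P1 _ _ Hv) -(cc (u ** u) Hc).
Qed.

Lemma A3 x y z : Rel x z -> x ** (y ** z) = (x ** y) ** z.
Proof. by case/RelP=> a Ha ->; rewrite !(P2 _ _ Ha) flex. Qed.
Lemma A5 x y z : Rel (x ** y) z -> x ** (y ** z) = (x ** y) ** z.
Proof. by case/RelP=> a Ha ->; rewrite !(P2 _ _ Ha) A4. Qed.
End Small.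

Lemma opX1q : {in Pq, forall X, op X one = X}.
Proof. exact: (opX1 one_in op_in op1X opR opL). Qed.

Lemma cosE x y : (cos x == cos y) = Rel x y.
Proof.
apply/eqP/idP => [E|]; last exact: cos_eq.
by rewrite -in_cos E in_cos Rel_refl.
Qed.

Lemma cos_oneE x : (cos x == one) = (x \in nucleus mul).
Proof. by rewrite /one eq_sym cosE Rel_e. Qed.

Lemma assoc_q4 : #|Pq| = 4 -> #|nucleus mul| <= 2 -> associative_op mul.
Proof.
move=> H4 H2 x y z.
case Nx: (x \in nucleus mul); first by apply/nuc_cases; left; apply/nucleusP.
case Ny: (y \in nucleus mul); first by apply/nuc_cases; right; left; apply/nucleusP.
case Nz: (z \in nucleus mul); first by apply/nuc_cases; right; right; apply/nucleusP.
case Rxy: (Rel x y); first exact: A1.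
case Ryz: (Rel y z); first exact: A2.
case Rxz: (Rel x z); first exact: A3.
set X := cos x; set Y := cos y; set Z := cos (x ** y).
have XP : X \in Pq := cos_in x; have YP : Y \in Pq := cos_in y.
have EZ : Z = op X Y by rewrite op_cos.
have d1 : X != one by rewrite cos_oneE Nx.
have d2 : Y != one by rewrite cos_oneE Ny.
have d3 : X != Y by rewrite cosE Rxy.
have d4 : Z != one.
  apply/negP => /eqP E; move/eqP: d3; apply.
  by rewrite -(opL XP YP) -EZ E opX1q.
have d5 : Z != X.
  apply/negP => /eqP E; move/eqP: d2; apply.
  by rewrite -(opL XP YP) -EZ E opXX.
have d6 : Z != Y.
  apply/negP => /eqP E; move/eqP: d1; apply.
  by rewrite -(opR YP XP) -EZ E opXX.
set S := [set W in [:: one; X; Y; Z]].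
have sub : S \subset Pq.
  apply/subsetP => W; rewrite inE !in_cons in_nil orbF.
  by case/or4P => /eqP ->; rewrite ?one_in ?cos_in.
have cS : #|S| = 4.
  rewrite cardsE; apply/card_uniqP => /=; rewrite !in_cons in_nil !orbF.
  rewrite !negb_or.
  by rewrite eq_sym d1 eq_sym d2 eq_sym d4 d3 eq_sym d5 eq_sym d6.
have := Pq_full sub; rewrite cS H4 => /(_ isT (cos z) (cos_in z)).
rewrite inE !in_cons in_nil orbF.
case/or4P => /eqP E.
- by move: Nz; rewrite -cos_oneE E eqxx.
- by move: Rxz; rewrite -cosE /X E eqxx.
- by move: Ryz; rewrite -cosE /Y E eqxx.
- by apply: (A5 H2); rewrite -cosE -/Z E eqxx.
Qed.

Section Triv.
Hypothesis H1 : #|nucleus mul| = 1.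

Lemma triv a : mn a -> a = e.
Proof.
move=> /nucleusP Ha.
have /eqP E : [set e] == nucleus mul.
  rewrite eqEcard cards1 H1 leqnn andbT sub1set.
  by apply/nucleusP/mn_e.
by move: Ha; rewrite -E inE => /eqP.
Qed.
Lemma sq x : x ** x = e. Proof. exact/triv/mn_sq. Qed.
Lemma invx x : inv x = x. Proof. by apply: (@mulI x); rewrite mulV sq. Qed.
Lemma commT x y : x ** y = y ** x.
Proof. by have := invM x y; rewrite !invx. Qed.
Lemma SL x y : x ** (x ** y) = y. Proof. by rewrite LAP sq mul1l. Qed.
Lemma SR x y : (y ** x) ** x = y. Proof. by rewrite RAP sq mul1r. Qed.
Lemma ceq_e x y : x ** y = e -> x = y.
Proof. by move=> E; rewrite -(SL x y) E mul1r. Qed.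
Lemma ceq_l x y : x ** y = x -> y = e.
Proof. by rewrite -{2}(mul1r x) => /mulI. Qed.
Lemma ceq_r x y : x ** y = y -> x = e.
Proof. by rewrite commT -{2}(mul1r y) => /mulI. Qed.
Lemma ccl x a b : x ** a = x ** b -> a = b. Proof. exact: mulI. Qed.
Lemma ccr x a b : a ** x = b ** x -> a = b. Proof. exact: mulIr. Qed.

Lemma assoc_T8 : #|T| = 8 -> associative_op mul.
Proof.
move=> H8 x y z.
case: (eqVneq x e) => [->|hx]; first by rewrite !mul1l.
case: (eqVneq y e) => [->|hy]; first by rewrite mul1l mul1r.
case: (eqVneq z e) => [->|hz]; first by rewrite !mul1r.
case: (eqVneq x y) => [<-|hxy]; first by rewrite SL sq mul1l.
case: (eqVneq z x) => [->|hzx]; first by rewrite (commT y x) SL (commT x y) SR.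
case: (eqVneq z y) => [->|hzy]; first by rewrite SR sq mul1r.
case: (eqVneq z (x ** y)) => [->|hzxy]; first by rewrite (commT x y) SL sq (commT y x) sq.
apply/eqP; apply: contraT => hp.
have : uniq [:: e; x; y; x ** y; z; x ** z; y ** z; x ** (y ** z); (x ** y) ** z].
  rewrite /= !in_cons in_nil !orbF !negb_or.
  rewrite !(eq_sym e) hx hy hz /=.
  rewrite ?andbT; repeat (apply/andP; split); apply/eqP => E.
  - by move/eqP: hxy; apply; apply: ceq_e.
  - by move/eqP: hzx; apply; rewrite (ceq_e E).
  - by move/eqP: hzy; apply; rewrite (ceq_e E).
  - by move/eqP: hzxy; apply; rewrite (ceq_e E) (commT y z) SR.
  - by move/eqP: hzxy; apply; rewrite (ceq_e E).
  - by move/eqP: hxy; apply.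
  - by move/eqP: hy; apply; apply: (ceq_l (esym E)).
  - by move/eqP: hzx; apply; rewrite E.
  - by move/eqP: hz; apply; apply: (ceq_l (esym E)).
  - by move/eqP: hzxy; apply; rewrite E (commT y z) SR.
  - by move/eqP: hzy; apply; rewrite (ceq_e (ceq_l (esym E))).
  - have E2 : x ** z = x ** y by rewrite {1}E SR.
    by move/eqP: hzy; apply; apply: (ccl E2).
  - by move/eqP: hx; apply; apply: (ceq_r (esym E)).
  - by move/eqP: hzy; apply; rewrite E.
  - by move/eqP: hzxy; apply; rewrite E SL.
  - by move/eqP: hz; apply; apply: (ceq_l (esym E)).
  - have E2 : x ** y = z ** y by rewrite {1}E SL commT.
    by move/eqP: hzx; apply; rewrite (ccr E2).
  - have E2 : z ** y = x ** y by rewrite commT {1}E SR.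
    by move/eqP: hzx; apply; rewrite (ccr E2).
  - by move/eqP: hzxy; apply; rewrite E.
  - by move/eqP: hzy; apply; rewrite (ccl E).
  - by rewrite (commT y z) in E; move/eqP: hzx; apply; rewrite (ccr E).
  - by move/eqP: hz; apply; apply: (@ceq_l y); rewrite -(ccl E).
  - by move/eqP: hz; apply; apply: (ceq_l (esym E)).
  - by move/eqP: hx; apply; apply: (ceq_r (esym E)).
  - by move/eqP: hy; apply; apply: (ceq_r (esym E)).
  - have E2 : x ** z = y ** z by rewrite {1}E SL.
    by move/eqP: hxy; apply; apply: (ccr E2).
  - by move/eqP: hxy; apply; apply: ceq_e; apply: (ceq_r (esym E)).
  - by move/eqP: hxy; apply; apply: (ccr E).
  - by move/eqP: hy; apply; apply: (ceq_r (esym (ccl E))).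
  - by move/eqP: hy; apply; apply: (ceq_l (esym (ccr E))).
  - by move/eqP: hx; apply; apply: (ceq_r (esym E)).
  - by move/eqP: hx; apply; apply: (ceq_r (esym (ccr E))).
  - by rewrite E eqxx in hp.

move/card_uniqP; rewrite /= => Hc.
have := max_card (mem [:: e; x; y; x ** y; z; x ** z; y ** z; x ** (y ** z); (x ** y) ** z]).
by rewrite Hc H8.
Qed.
End Triv.
End CLoop.

Lemma part1 (T : finType) (mul : T -> T -> T) (e : T) :
     is_C_loop mul e -> ~ associative_op mul ->
     let n := #|T| in let m := #|nucleus mul| in
     [/\ (m %| n)%N /\ ((n %/ m) %% 6 = 2 \/ (n %/ m) %% 6 = 4)%N,
         ~~ odd n &
         forall p k : nat, prime p -> (0 < k)%N -> n = (p ^ k)%N ->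
           p = 2 /\ (3 < k)%N].
Proof.
move=> HC NA n m.
have HT : n = #|Pq mul e| * m := cardT_Pq HC.
have Hm : 0 < m := nuc_gt0 HC.
have Hq := Pq_gt1 HC NA.
have Hs : #|Pq mul e| %% 6 = 2 \/ #|Pq mul e| %% 6 = 4.
  by apply: steiner_mod6 => //; [exact: one_in | exact: op_in | exact: opXX | exact: op1X | exact: opR | exact: opL].
have Hev : ~~ odd #|Pq mul e|.
  by apply: steiner_even => //; [exact: one_in | exact: op_in | exact: opXX | exact: opR | exact: opL].
have Hnm : n %/ m = #|Pq mul e| by rewrite HT mulnK.
split.
- by split; [rewrite HT dvdn_mull | rewrite Hnm].
- by rewrite HT oddM negb_and Hev.
move=> p k pP k0 Hn.
have p2 : p = 2.
  have : 2 %| p ^ k.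
    by rewrite -Hn HT dvdn_mulr // dvdn2.
  rewrite Euclid_dvdX // k0 andbT => H2.
  by apply/eqP; rewrite eq_sym -dvdn_prime2.
split => //.
rewrite ltnNge; apply/negP => k3.
set q := #|Pq mul e| in HT Hq Hs Hev Hnm.
have qle : q <= n by rewrite HT leq_pmulr.
have n8 : n <= 8.
  rewrite Hn p2; case: k k0 k3 {Hn} => [|[|[|[|]]]] //.
have Hq3 : q = 2 \/ q = 4 \/ q = 8 by lia.
case: Hq3 => [E|[E|E]].
- by apply: NA; apply: (assoc_q2 HC); rewrite -E.
- apply: NA; apply: (assoc_q4 HC); first by rewrite -E.
  by rewrite -/m; lia.
- apply: NA; apply: (assoc_T8 HC); last by rewrite -/n; lia.
  by rewrite -/m; lia.
Qed.


Definition V := (bool * bool * bool)%type.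
Definition xorV (u v : V) : V :=
  let: (u0, u1, u2) := u in let: (v0, v1, v2) := v in (u0 (+) v0, u1 (+) v1, u2 (+) v2).
Definition fV (u v : V) : bool :=
  let: (u0, u1, u2) := u in let: (v0, v1, v2) := v in
  [&& u0, v1 & v2] (+) [&& u1, v0 & v2] (+) [&& u2, v0 & v1].
Definition T16 := (bool * V)%type.
Definition mul16 (x y : T16) : T16 :=
  let: (a, u) := x in let: (b, v) := y in (a (+) b (+) fV u v, xorV u v).
Definition e16 : T16 := (false, (false, false, false)).

Lemma C16 x y z : mul16 x (mul16 y (mul16 y z)) = mul16 (mul16 (mul16 x y) y) z.
Proof.
move: x y z => [a [[u0 u1] u2]] [b [[v0 v1] v2]] [c [[w0 w1] w2]].
by case: a; case: b; case: c; case: u0; case: u1; case: u2; case: v0; case: v1; case: v2;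
  case: w0; case: w1; case: w2.
Qed.

Definition ldiv16 (x w : T16) : T16 :=
  let: (a, u) := x in let: (c, t) := w in
  let v := xorV u t in (c (+) a (+) fV u v, v).
Definition rdiv16 (y w : T16) : T16 :=
  let: (b, v) := y in let: (c, t) := w in
  let u := xorV t v in (c (+) b (+) fV u v, u).

Lemma ldivK16 a : cancel (mul16 a) (ldiv16 a).
Proof.
move: a => [a [[u0 u1] u2]] [b [[v0 v1] v2]].
by case: a; case: b; case: u0; case: u1; case: u2; case: v0; case: v1; case: v2.
Qed.
Lemma mulK16 a : cancel (ldiv16 a) (mul16 a).
Proof.
move: a => [a [[u0 u1] u2]] [b [[v0 v1] v2]].
by case: a; case: b; case: u0; case: u1; case: u2; case: v0; case: v1; case: v2.
Qed.
Lemma rdivK16 a : cancel (fun x => mul16 x a) (rdiv16 a).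
Proof.
move: a => [a [[u0 u1] u2]] [b [[v0 v1] v2]].
by case: a; case: b; case: u0; case: u1; case: u2; case: v0; case: v1; case: v2.
Qed.
Lemma mulrK16 a : cancel (rdiv16 a) (fun x => mul16 x a).
Proof.
move: a => [a [[u0 u1] u2]] [b [[v0 v1] v2]].
by case: a; case: b; case: u0; case: u1; case: u2; case: v0; case: v1; case: v2.
Qed.
Lemma e16l x : mul16 e16 x = x.
Proof. by move: x => [b [[v0 v1] v2]]; case: b; case: v0; case: v1; case: v2. Qed.
Lemma e16r x : mul16 x e16 = x.
Proof. by move: x => [b [[v0 v1] v2]]; case: b; case: v0; case: v1; case: v2. Qed.

Section Prod.
Variable j : nat.
Definition G := {ffun 'I_j -> bool}.
Definition TP := (T16 * G)%type.
Definition xorG (g h : G) : G := [ffun i => g i (+) h i].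
Definition mulP (x y : TP) : TP := (mul16 x.1 y.1, xorG x.2 y.2).
Definition eP : TP := (e16, [ffun => false]).

Lemma xorGK g : cancel (xorG g) (xorG g).
Proof. by move=> h; apply/ffunP => i; rewrite !ffunE addbA addbb. Qed.
Lemma xorGKr g : cancel (xorG^~ g) (xorG^~ g).
Proof. by move=> h; apply/ffunP => i; rewrite !ffunE -addbA addbb addbF. Qed.

Lemma CP : is_C_loop mulP eP.
Proof.
split; last first.
  move=> [x g] [y h] [z k]; rewrite /mulP /= C16; congr pair.
  by apply/ffunP => i; rewrite !ffunE; case: (g i); case: (h i); case: (k i).
split; first by move=> [a g]; exists (fun w => (ldiv16 a w.1, xorG g w.2));
  move=> [x h]; rewrite /mulP /= ?ldivK16 ?mulK16 ?xorGK.
split; first by move=> [a g]; exists (fun w => (rdiv16 a w.1, xorG^~ g w.2));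
  move=> [x h]; rewrite /mulP /= ?rdivK16 ?mulrK16 ?xorGKr.
move=> [x g]; split; rewrite /mulP; congr pair; try exact: e16l; try exact: e16r;
  by apply/ffunP => i; rewrite !ffunE ?addbF.
Qed.

Definition g0 : G := [ffun => false].
Lemma NAP : ~ associative_op mulP.
Proof.
move=> /(_ (false, (false, false, true), g0) (false, (false, true, false), g0)
            (false, (true, false, false), g0)).
by rewrite /mulP /= => [[]].
Qed.

Lemma NSP : ~ is_Steiner_loop mulP eP.
Proof.
case=> _ /(_ (false, (true, true, true), g0) eP) [H _].
by move: H; rewrite /mulP /eP /= => [[]].
Qed.

Lemma cardP : #|{: TP}| = 16 * 2 ^ j.
Proof. by rewrite card_prod card_ffun card_ord card_bool !card_prod !card_bool. Qed.
End Prod.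

Lemma part2 (k : nat) : (3 < k)%N ->
     exists (T : finType) (mul : T -> T -> T) (e : T),
       [/\ is_C_loop mul e, ~ associative_op mul, #|T| = (2 ^ k)%N &
           ~ is_Steiner_loop mul e].
Proof.
move=> k3; exists (TP (k - 4)), (@mulP (k - 4)), (@eP (k - 4)); split.
- exact: CP.
- exact: NAP.
- by rewrite cardP -[in RHS](subnKC k3) expnD.
- exact: NSP.
Qed.

Theorem proposition3p1 :
  (forall (T : finType) (mul : T -> T -> T) (e : T),
     is_C_loop mul e -> ~ associative_op mul ->
     let n := #|T| in let m := #|nucleus mul| in
     [/\ (m %| n)%N /\ ((n %/ m) %% 6 = 2 \/ (n %/ m) %% 6 = 4)%N,
         ~~ odd n &
         forall p k : nat, prime p -> (0 < k)%N -> n = (p ^ k)%N ->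
           p = 2 /\ (3 < k)%N])
  /\
  (forall k : nat, (3 < k)%N ->
     exists (T : finType) (mul : T -> T -> T) (e : T),
       [/\ is_C_loop mul e, ~ associative_op mul, #|T| = (2 ^ k)%N &
           ~ is_Steiner_loop mul e]).
Proof.
split; [exact: part1 | exact: part2].
Qed.
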